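(* Let $R$ be a commutative ring containing $\mathbb{Q}$, let $\boldsymbol{a}\in H_R$ with $a_0\in R^*$, and let $\boldsymbol{\lambda}^{(-1)}:=\lambda_{+,0}(\boldsymbol{a})^{(-1)}$. Put $\bar\lambda_i=\boldsymbol{\lambda}^{(-1)}[i]/i!$ for $i\ge1$. Then for all $n\ge0$, $$\boldsymbol{\lambda}^{(-1)}[n+1]=n!\sum_{k=0}^{n}\frac{\boldsymbol{a}^{-1}[k]}{k!}\,B_{n,k}\big(\bar\lambda_1,\dots,\bar\lambda_{n-k+1}\big).$$
   Context: $H_R$ is the set of sequences $\boldsymbol{a}=(a_n)_{n\ge0}$ in $R$, $\boldsymbol{a}[n]=a_n$. $\boldsymbol{a}^{-1}$ is the inverse for the Hurwitz product $(\boldsymbol{a}\star\boldsymbol{b})_n=\sum_{h=0}^n\binom{n}{h}a_hb_{n-h}$ (identity $(1,0,0,\dots)$). For $\boldsymbol{b}$ with $b_0=0$, $\boldsymbol{a}\circ\boldsymbol{b}$ is the sequence whose exponential generating function is $A(B(t))$, where $A(t)=\sum_n a_nt^n/n!$, $B(t)=\sum_n b_nt^n/n!$; its identity is $(0,1,0,\dots)$ and $\boldsymbol{c}^{(-1)}$ denotes the $\circ$-inverse (which exists iff $c_0=0$, $c_1\in R^*$). $\lambda_{+,0}(a_0,a_1,\dots)=(0,a_0,a_1,\dots)$. The partial ordinary Bell polynomials $B_{n,k}$ are defined by $B_{0,0}=1$, $B_{n,0}=0$ ($n\ge1$), $B_{0,k}=0$ ($k\ge1$), and $\big(\sum_{n\ge1}y_nz^n\big)^k=\sum_{n\ge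 k}B_{n,k}(y_1,\dots,y_{n-k+1})z^n$. *)

(* Defs.v *)
From HB Require Import structures.
From mathcomp Require Import all_boot all_order all_algebra.
Set Implicit Arguments. Unset Strict Implicit. Unset Printing Implicit Defensive.
Import Order.TTheory GRing.Theory Num.Theory.
Local Open Scope ring_scope.

(* Sequences in H_R are represented as functions nat -> R. *)

Definition hurwitz (R : comUnitRingType) (a b : nat -> R) : nat -> R :=
  fun n => \sum_(h < n.+1) 'C(n, h)%:R * a h * b (n - h)%N.

Definition hurwitz_one (R : comUnitRingType) : nat -> R :=
  fun n => if n == 0%N then 1 else 0.

Definition comp_id (R : comUnitRingType) : nat -> R :=
  fun n => if n == 1%N then 1 else 0.

Definition lambda_plus0 (R : comUnitRingType) (a : nat -> R) : nat -> R :=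
  fun n => if n is m.+1 then a m else 0.

(* Only y_1..y_n can
   contribute to the z^n coefficient, so the series is truncated at degree n. *)
Definition bellB (R : comUnitRingType) (n k : nat) (y : nat -> R) : R :=
  ((\sum_(1 <= i < n.+1) y i *: 'X^i : {poly R}) ^+ k)`_n.

(* Composition a o b (for b_0 = 0): the sequence whose EGF is A(B(t)),
   i.e. (a o b)_n = n! [t^n] sum_k (a_k/k!) B(t)^k with
   B(t) = sum_{j>=1} (b_j/j!) t^j  (R is assumed to contain Q where used). *)
Definition hcomp (R : comUnitRingType) (a b : nat -> R) : nat -> R :=
  fun n => n`!%:R * \sum_(k < n.+1) (a k / k`!%:R) *
     ((\sum_(1 <= j < n.+1) (b j / j`!%:R) *: 'X^j : {poly R}) ^+ k)`_n.

(* Main.v *)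
Require Import Defs.
From HB Require Import structures.
From mathcomp Require Import all_boot all_order all_algebra.
From mathcomp Require Import ring zify.
Import GRing.Theory.
Local Open Scope ring_scope.

Section Aux.
Variable R : comUnitRingType.

Definition eqmod (d : nat) (p q : {poly R}) := forall i, (i < d)%N -> p`_i = q`_i.

Lemma eqmod_mul d p p' q q' : eqmod d p p' -> eqmod d q q' ->
  eqmod d (p * q) (p' * q').
Proof.
move=> Hp Hq i hi; rewrite !coefM; apply: eq_bigr => j _.
have hj := ltn_ord j.
rewrite Hp ?Hq //; lia.
Qed.

Lemma eqmod_exp d p p' k : eqmod d p p' -> eqmod d (p ^+ k) (p' ^+ k).
Proof.
move=> H; elim: k => [|k IH]; first by move=> i _.
by rewrite !exprS; apply: eqmod_mul.
Qed.

Lemma eqmod_sym d p q : eqmod d p q -> eqmod d q p.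
Proof. by move=> H i hi; rewrite H. Qed.

Lemma eqmod_trans d p q r : eqmod d p q -> eqmod d q r -> eqmod d p r.
Proof. by move=> H1 H2 i hi; rewrite H1 // H2. Qed.

Lemma coef_exp_low (m : {poly R}) : m`_0 = 0 ->
  forall k i, (i < k)%N -> (m ^+ k)`_i = 0.
Proof.
move=> h0; elim=> [|k IH] i hi //.
rewrite exprS coefM big1 // => j _.
have hj := ltn_ord j.
case: (nat_of_ord j) hj => [|j'] hj; first by rewrite h0 mul0r.
rewrite IH ?mulr0 //; lia.
Qed.

Lemma sum_trunc (f : nat -> R) n1 n2 : (forall i, (n1 <= i)%N -> f i = 0) ->
  (n1 <= n2)%N -> \sum_(i < n2) f i = \sum_(i < n1) f i.
Proof.
move=> H hn; rewrite (big_ord_widen _ f hn) [RHS]big_mkcond /=.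
apply: eq_bigr => i _; case: ifP => // /negbT; rewrite -leqNgt => /H ->.
by [].
Qed.

Lemma coef_comp (p m : {poly R}) j : m`_0 = 0 ->
  (p \Po m)`_j = \sum_(k < j.+1) p`_k * (m ^+ k)`_j.
Proof.
move=> h0; rewrite comp_polyE coef_sum.
under eq_bigr do rewrite coefZ.
set f := fun k => p`_k * (m ^+ k)`_j.
rewrite -(@sum_trunc f (size p) (size p + j.+1)%N); last 2 first.
- by move=> i hi; rewrite /f nth_default // mul0r.
- lia.
rewrite (@sum_trunc f j.+1) //; last lia.
by move=> i hi; rewrite /f coef_exp_low ?mulr0.
Qed.

Lemma eqmod_comp d (p p' m : {poly R}) : m`_0 = 0 -> eqmod d p p' ->
  eqmod d (p \Po m) (p' \Po m).
Proof.
move=> h0 H i hi; rewrite !coef_comp //; apply: eq_bigr => k _.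
have hk := ltn_ord k.
rewrite H //; lia.
Qed.

Lemma coef_comp_poly (c : nat -> R) N (m m' : {poly R}) i :
  m`_0 = 0 -> eqmod i.+1 m m' -> (i < N)%N ->
  (\poly_(k < N) c k \Po m)`_i = \sum_(k < i.+1) c k * (m' ^+ k)`_i.
Proof.
move=> h0 hm hi; rewrite coef_comp //; apply: eq_bigr => k _.
have hk := ltn_ord k.
rewrite coef_poly ifT; last lia.
by rewrite (eqmod_exp _ _ _ k hm i (ltnSn i)).
Qed.

End Aux.

Theorem mainTheorem2 (R : comUnitRingType)
  (hQ : forall m : nat, (m.+1)%:R \is a @GRing.unit R)
  (a ainv lam_inv : nat -> R)
  (ha0 : a 0%N \is a GRing.unit)
  (hainv : hurwitz a ainv = hurwitz_one R)
  (hlam0 : lam_inv 0%N = 0)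
  (hlamL : hcomp (lambda_plus0 a) lam_inv = comp_id R)
  (hlamR : hcomp lam_inv (lambda_plus0 a) = comp_id R)
  (n : nat) :
  lam_inv n.+1 =
    n`!%:R * \sum_(k < n.+1) (ainv k / k`!%:R) *
      bellB n k (fun i => lam_inv i / i`!%:R).
Proof.
have fu : forall k, (k`!)%:R \is a @GRing.unit R.
  by move=> k; rewrite -(prednK (fact_gt0 k)); apply: hQ.
set mu := fun j => lam_inv j / j`!%:R.
set M := fun i => \poly_(j < i.+1) mu j.
have Mdef : forall i, \sum_(1 <= j < i.+1) (lam_inv j / j`!%:R) *: 'X^j = M i.
  move=> i; rewrite /M poly_def -(big_mkord xpredT (fun j => mu j *: 'X^j)).
  by rewrite big_ltn // /mu hlam0 mul0r scale0r add0r.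
have M0 : forall i, (M i)`_0 = 0.
  by move=> i; rewrite coef_poly /= /mu hlam0 mul0r.
have Meq : forall i d, (i <= d)%N -> eqmod R i.+1 (M i) (M d).
  move=> i d hid j hj; rewrite !coef_poly hj ifT //; lia.
set D := n.+1.
set m := M D.
set alpha := fun k => a k / k`!%:R.
set beta := fun k => ainv k / k`!%:R.
set ell := fun k => lambda_plus0 a k / k`!%:R.
set Pl := \poly_(k < D.+1) ell k.
set Pa := \poly_(k < D) alpha k.
set Pb := \poly_(k < D) beta k.
have hm0 : m`_0 = 0 by apply: M0.
have dPl : Pl^`() = Pa.
  apply/polyP => i; rewrite coef_deriv !coef_poly.
  rewrite ltnS; case: ifP => hi //; first last. by rewrite mul0rn.
  rewrite /ell /alpha (_ : lambda_plus0 a i.+1 = a i) //.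
  have -> : ((i.+1)`!%:R : R) = i.+1%:R * i`!%:R by rewrite factS natrM.
  rewrite invrM ?fu ?hQ // -[_ *+ i.+1]mulr_natr.
  rewrite (_ : a i * ((i`!%:R)^-1 / i.+1%:R) * i.+1%:R =
     a i * (i`!%:R)^-1 * ((i.+1%:R)^-1 * i.+1%:R)); last by ring.
  by rewrite mulVr ?hQ // mulr1.
have hF : forall i, (i <= D)%N -> (Pl \Po m)`_i = (i == 1%N)%:R.
  move=> i hi.
  have := congr1 (fun f => f i) hlamL; rewrite /hcomp /comp_id Mdef /= => h.
  have h' := congr1 (fun x => (i`!%:R)^-1 * x) h; rewrite /= mulKr ?fu // in h'.
  have e1 : eqmod R i.+1 m (M i) by apply: eqmod_sym; apply: Meq.
  have e2 : (i < D.+1)%N by lia.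
  rewrite (@coef_comp_poly _ ell _ _ _ _ hm0 e1 e2).
  rewrite h'; case: i {hi h h' e1 e2} => [|[|i]] /=; rewrite ?mulr0 //.
  by rewrite invr1 mulr1.
have hGm : eqmod R D ((Pa \Po m) * m^`()) 1.
  move=> i hi; rewrite -dPl -deriv_comp coef_deriv hF // coef1.
  by case: i {hi} => [|i] /=; rewrite ?mulr1n ?mul0rn.
have hab : eqmod R D (Pa * Pb) 1.
  move=> i hi; rewrite coefM coef1.
  have h := congr1 (fun f => f i) hainv; rewrite /hurwitz /hurwitz_one /= in h.
  have h' := congr1 (fun x => (i`!%:R)^-1 * x) h.
  rewrite /= mulr_sumr in h'.
  have -> : ((i == 0%N)%:R : R) = (i`!%:R)^-1 * (if i == 0%N then 1 else 0).
    by case: eqP => [->|_]; rewrite ?invr1 ?mulr1 ?mulr0.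
  rewrite -h'; apply: eq_bigr => j _.
  have hj := ltn_ord j.
  rewrite !coef_poly ifT; last lia. rewrite ifT; last lia.
  rewrite /alpha /beta.
  have hb := bin_fact (ltnSE hj).
  have -> : (i`!%:R : R) = 'C(i, j)%:R * (j`!%:R * (i - j)`!%:R).
    by rewrite -!natrM hb.
  set c := ('C(i, j)%:R : R); set u := (j`!%:R : R); set v := ((i - j)`!%:R : R).
  have cu : c \is a GRing.unit.
    have hc : (0 < 'C(i, j))%N by rewrite bin_gt0 -ltnS.
    by rewrite /c -(prednK hc); apply: hQ.
  rewrite (invrM cu); last by rewrite unitrM !fu.
  rewrite (invrM (fu _) (fu _)).
  rewrite [RHS](_ : _ = (c^-1 * c) * (a j / u * (ainv (i - j)%N / v))); last by ring.
  by rewrite mulVr // mul1r.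
have hGH : eqmod R D ((Pa \Po m) * (Pb \Po m)) 1.
  rewrite -comp_polyM -(comp_poly_multiplicative m).2.
  by apply: eqmod_comp.
have hdm : eqmod R D (m^`()) (Pb \Po m).
  have e1 : eqmod R D (m^`()) (((Pa \Po m) * (Pb \Po m)) * m^`()).
    rewrite -{1}(mul1r (m^`())); apply: eqmod_mul; first by apply: eqmod_sym.
    by [].
  apply: eqmod_trans; first exact: e1.
  rewrite (mulrC (Pa \Po m)) -mulrA -{2}(mulr1 (Pb \Po m)).
  by apply: eqmod_mul.
have := hdm n (ltnSn n).
rewrite coef_deriv /m /M coef_poly ifT //.
have e1 : eqmod R n.+1 (M D) (M n) by apply: eqmod_sym; apply: Meq; rewrite /D.
rewrite (@coef_comp_poly _ beta _ _ _ _ (M0 D) e1 (ltnSn n)).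
move=> e.
rewrite /bellB.
under [X in _ = _ * X]eq_bigr do rewrite Mdef.
rewrite -e /mu.
have -> : ((n.+1)`!%:R : R) = n.+1%:R * n`!%:R by rewrite factS natrM.
rewrite invrM ?fu ?hQ // -[_ *+ n.+1]mulr_natr.
rewrite [RHS](_ : _ = lam_inv D * (n`!%:R * (n`!%:R)^-1) * ((n.+1%:R)^-1 * n.+1%:R)); last by rewrite /D; ring.
by rewrite mulVr ?hQ // divrr ?fu // !mulr1.
Qed.
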